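(* Let $\mathrm P$ be a polymatroid on $E$ of type $\mathbf a$. Then the support of the augmented Bergman fan $\Sigma_{\mathrm P}$ (a subfan of $\Sigma_{\mathbf a}$) equals the support of the augmented Bergman fan $\Sigma_{\mathrm M_\pi(\mathrm P)}$ of the multisymmetric lift (a subfan of the stellahedral fan $\Sigma_{\widetilde E}$); more precisely, $\Sigma_{\mathrm P}$ is the coarsening of $\Sigma_{\mathrm M_\pi(\mathrm P)}$ which is a subfan of $\Sigma_{\mathbf a}$.
   Context: $E=\{1,\dots,m\}$, $\mathbf a\in\mathbb Z_{\ge0}^m$, $n=\sum a_i$. Polymatroid $\mathrm P$ of type $\mathbf a$: submodular monotone $\operatorname{rk}_{\mathrm P}:2^E\to\mathbb Z_{\ge0}$ with $\operatorname{rk}_{\mathrm P}(\emptyset)=0$, $\operatorname{rk}_{\mathrm P}(\{i\})\le a_i$. Flats: $F$ with $\operatorname{rk}(F\cup e)>\operatorname{rk}(F)$ for $e\notin F$. $\widetilde E$ is an $n$-element set, $\pi:\widetilde E\to E$ with $|\pi^{-1}(i)|=a_i$; $\mathbf e_U=\sum_{j\in U}\mathbf e_j\in\mathbb R^{\widetilde E}$. For any map $\pi:\widetilde E\to E$, a compatible pair $I\le\mathcal F$ is $I\subseteq\widetilde E$ and a chain $\mathcal F=\{F_1\subsetneq\dots\subsetneq F_{k+1}=E\}$ ($k\ge0$) with $\pi^{-1}(A)\subseteq I\Rightarrow A\subseteq F_1$; the fan $\Sigma_\pi$ has cones $\sigma_{I\le\mathcal F}=\operatorname{cone}(-\mathbf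 e_{\widetilde E\setminus\pi^{-1}(F_1)},\dots,-\mathbf e_{\widetilde E\setminus\pi^{-1}(F_k)},\mathbf e_j:j\in I)$. $\Sigma_{\mathbf a}=\Sigma_\pi$; the stellahedral fan $\Sigma_{\widetilde E}$ is $\Sigma_{\mathrm{id}}$ for $\mathrm{id}:\widetilde E\to\widetilde E$. The augmented Bergman fan $\Sigma_{\mathrm P}$ is the subfan of $\Sigma_{\mathbf a}$ of cones $\sigma_{S\le\mathcal F}$ with $S\subseteq\widetilde E$, $F_1,\dots,F_k$ proper flats of $\mathrm P$, such that (1) $\operatorname{rk}_{\mathrm P}(\pi(T))\ge|T|$ for all $T\subseteq S$ and (2) $\operatorname{rk}_{\mathrm P}(F\cup\pi(T))>\operatorname{rk}_{\mathrm P}(F)+|T|$ for all $F\in\mathcal F$ and nonempty $T\subseteq S\setminus\pi^{-1}(F)$. The multisymmetric lift $\mathrm M_\pi(\mathrm P)$ is the matroid on $\widetilde E$ with rank function $\operatorname{rk}(U)=\min_{A\subseteq E}\{\operatorname{rk}_{\mathrm P}(A)+|U\setminus\pi^{-1}(A)|\}$. For a matroid $\mathrm M$ on $\widetilde E$, its augmented Bergman fan $\Sigma_{\mathrm M}$ is the subfan of $\Sigma_{\widetilde E}$ of cones $\sigma_{I\le\mathcal F}$ with $I$ independent in $\mathrm M$, $\mathcal F$ a chain of proper flats of $\mathrm M$ (plus the ground set) and $I\subseteq F_1$. *)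

(* Defs.v *)
From HB Require Import structures.
From mathcomp Require Import all_boot all_order all_algebra.
From mathcomp Require Import reals.
Set Implicit Arguments. Unset Strict Implicit. Unset Printing Implicit Defensive.
Import Order.TTheory GRing.Theory Num.Theory.
Local Open Scope ring_scope.

Definition polymatroid (m : nat) (a : 'I_m -> nat) (rk : {set 'I_m} -> nat) : Prop :=
  [/\ rk set0 = 0%N,
      (forall A B : {set 'I_m}, A \subset B -> (rk A <= rk B)%N),
      (forall A B : {set 'I_m}, (rk (A :|: B) + rk (A :&: B) <= rk A + rk B)%N)
    & (forall i : 'I_m, (rk [set i] <= a i)%N)].

Definition is_flat (T : finType) (rk : {set T} -> nat) (F : {set T}) : Prop :=
  forall e : T, e \notin F -> (rk F < rk (e |: F))%N.

(* Multisymmetric lift: rank function on subsets of E~ = 'I_n,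
   rk(U) = min_{A subset E} rk_P(A) + |U \ pi^{-1}(A)|.
   (The neutral element rk_P(E) of the min is the value of the term at A = E,
    so this is exactly the minimum over all A.) *)
Definition lift_rank (m n : nat) (pi : 'I_n -> 'I_m) (rk : {set 'I_m} -> nat)
  (U : {set 'I_n}) : nat :=
  \big[minn/rk setT]_(A : {set 'I_m}) (rk A + #|U :\: pi @^-1: A|)%N.

Definition independent (T : finType) (rk : {set T} -> nat) (I : {set T}) : Prop :=
  rk I = #|I|.

Definition evec (R : realType) (n : nat) (U : {set 'I_n}) : 'rV[R]_n :=
  \row_j (j \in U)%:R.

Definition in_cone (R : realType) (n : nat) (g : seq 'rV[R]_n) (x : 'rV[R]_n) : Prop :=
  exists lam : 'I_(size g) -> R,
    (forall i, 0 <= lam i) /\ x = \sum_(i < size g) lam i *: g`_i.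

(* A chain F_1 ⊊ ... ⊊ F_k of proper subsets (F_{k+1} = E is implicit),
   represented by the list [:: F_1; ...; F_k]. *)
Definition proper_chain (T : finType) (Fs : seq {set T}) : Prop :=
  sorted (fun A B : {set T} => A \proper B) Fs /\
  (forall F, F \in Fs -> F \proper [set: T]).

Definition chain_bottom (T : finType) (Fs : seq {set T}) : {set T} :=
  head [set: T] Fs.

Definition compatible (T : finType) (n : nat) (pi : 'I_n -> T)
  (I : {set 'I_n}) (Fs : seq {set T}) : Prop :=
  forall A : {set T}, pi @^-1: A \subset I -> A \subset chain_bottom Fs.

Definition cone_gens (R : realType) (T : finType) (n : nat) (pi : 'I_n -> T)
  (I : {set 'I_n}) (Fs : seq {set T}) : seq 'rV[R]_n :=
  [seq - evec R (~: (pi @^-1: F)) | F : {set T} <- Fs] ++ [seq evec R [set j] | j <- enum I].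

Definition cone_of (R : realType) (T : finType) (n : nat) (pi : 'I_n -> T)
  (I : {set 'I_n}) (Fs : seq {set T}) : 'rV[R]_n -> Prop :=
  in_cone (cone_gens R pi I Fs).

Definition Sigma_pi_idx (T : finType) (n : nat) (pi : 'I_n -> T)
  (I : {set 'I_n}) (Fs : seq {set T}) : Prop :=
  proper_chain Fs /\ compatible pi I Fs.

Definition Sigma_P_idx (m n : nat) (pi : 'I_n -> 'I_m) (rk : {set 'I_m} -> nat)
  (S : {set 'I_n}) (Fs : seq {set 'I_m}) : Prop :=
  [/\ Sigma_pi_idx pi S Fs,
      (forall F, F \in Fs -> is_flat rk F),
      (forall T : {set 'I_n}, T \subset S -> (#|T| <= rk (pi @: T))%N)
    & (forall F, F \in rcons Fs [set: 'I_m] ->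
        forall T : {set 'I_n}, T \subset S :\: pi @^-1: F -> T != set0 ->
          (rk F + #|T| < rk (F :|: pi @: T))%N)].

Definition Sigma_M_idx (n : nat) (rkM : {set 'I_n} -> nat)
  (I : {set 'I_n}) (Fs : seq {set 'I_n}) : Prop :=
  [/\ Sigma_pi_idx id I Fs,
      independent rkM I,
      (forall F, F \in Fs -> is_flat rkM F)
    & I \subset chain_bottom Fs].

(* Main.v *)
Require Import Defs.
From HB Require Import structures.
From mathcomp Require Import all_boot all_order all_algebra.
From mathcomp Require Import reals.
From mathcomp Require Import zify.
Set Implicit Arguments. Unset Strict Implicit. Unset Printing Implicit Defensive.
Import Order.TTheory GRing.Theory Num.Theory.

Module M_A.
Local Open Scope ring_scope.

Lemma in_cone_ind (R : realType) (n : nat) (g : seq 'rV[R]_n) (Phi : 'rV[R]_n -> Prop) x :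
  Phi 0 -> (forall u v, Phi u -> Phi v -> Phi (u + v)) ->
  (forall c v, 0 <= c -> Phi v -> Phi (c *: v)) ->
  (forall v, v \in g -> Phi v) -> in_cone g x -> Phi x.
Proof.
move=> H0 HD HZ Hg [lam [lam0 ->]].
apply: (big_ind Phi) => // i _; apply: HZ => //; apply: Hg; exact: mem_nth.
Qed.

Lemma in_cone0 (R : realType) (n : nat) (g : seq 'rV[R]_n) : in_cone g 0.
Proof. exists (fun _ => 0); split => //; by rewrite big1 // => i _; rewrite scale0r. Qed.

Lemma in_coneD (R : realType) (n : nat) (g : seq 'rV[R]_n) u v :
  in_cone g u -> in_cone g v -> in_cone g (u + v).
Proof.
move=> [l1 [l10 ->]] [l2 [l20 ->]]; exists (fun i => l1 i + l2 i); split.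
  by move=> i; rewrite addr_ge0.
by rewrite -big_split /=; apply: eq_bigr => i _; rewrite scalerDl.
Qed.

Lemma in_coneZ (R : realType) (n : nat) (g : seq 'rV[R]_n) c v :
  0 <= c -> in_cone g v -> in_cone g (c *: v).
Proof.
move=> c0 [l [l0 ->]]; exists (fun i => c * l i); split.
  by move=> i; rewrite mulr_ge0.
by rewrite scaler_sumr; apply: eq_bigr => i _; rewrite scalerA.
Qed.

Lemma in_cone_mem (R : realType) (n : nat) (g : seq 'rV[R]_n) v :
  v \in g -> in_cone g v.
Proof.
move=> vg; have ig : (index v g < size g)%N by rewrite index_mem.
exists (fun i : 'I_(size g) => if i == Ordinal ig then 1 else 0); split.
  by move=> i; case: ifP.
rewrite (bigD1 (Ordinal ig)) //= eqxx scale1r big1 ?addr0 ?nth_index //.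
by move=> i /negbTE ->; rewrite scale0r.
Qed.

Lemma in_cone_sub (R : realType) (n : nat) (g1 g2 : seq 'rV[R]_n) x :
  (forall v, v \in g1 -> in_cone g2 v) -> in_cone g1 x -> in_cone g2 x.
Proof.
move=> H; apply: in_cone_ind => //.
- exact: in_cone0.
- by move=> u v; apply: in_coneD.
- by move=> c v; apply: in_coneZ.
Qed.

Lemma in_cone_sum (R : realType) (n : nat) (g : seq 'rV[R]_n) (I : Type) (r : seq I)
  (P : pred I) (F : I -> 'rV[R]_n) :
  (forall i, P i -> in_cone g (F i)) -> in_cone g (\sum_(i <- r | P i) F i).
Proof.
move=> H; apply: (big_ind (in_cone g)) => //; first exact: in_cone0.
by move=> u v; apply: in_coneD.
Qed.

Lemma evecE (R : realType) (n : nat) (U : {set 'I_n}) j :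
  evec R U 0 j = (j \in U)%:R.
Proof. by rewrite /evec mxE. Qed.

Lemma preimset_id (T : finType) (A : {set T}) : id @^-1: A = A.
Proof. by apply/setP => x; rewrite inE. Qed.

End M_A.
Import M_A.

Module M_C.

Lemma lift_le (m n : nat) (pi : 'I_n -> 'I_m) (rk : {set 'I_m} -> nat) U A :
  (lift_rank pi rk U <= rk A + #|U :\: pi @^-1: A|)%N.
Proof.
rewrite /lift_rank; have : A \in index_enum {set 'I_m} by rewrite mem_index_enum.
elim: (index_enum _) => // B r IH; rewrite inE big_cons; case/orP=> [/eqP <-|/IH h].
  exact: geq_minl.
by apply: leq_trans h; exact: geq_minr.
Qed.

Lemma lift_ge (m n : nat) (pi : 'I_n -> 'I_m) (rk : {set 'I_m} -> nat) U c :
  (forall A, c <= rk A + #|U :\: pi @^-1: A|)%N -> (c <= lift_rank pi rk U)%N.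
Proof.
move=> H; rewrite /lift_rank; apply: (big_ind (fun v => c <= v)%N) => //.
  have := H setT; rewrite preimsetT setDT cards0 addn0 //.
by move=> x y hx hy; rewrite leq_min hx hy.
Qed.

Lemma lift_att (m n : nat) (pi : 'I_n -> 'I_m) (rk : {set 'I_m} -> nat) U :
  exists A, lift_rank pi rk U = (rk A + #|U :\: pi @^-1: A|)%N.
Proof.
rewrite /lift_rank; apply: (big_ind (fun v => exists A, v = rk A + #|U :\: pi @^-1: A|)%N).
- by exists setT; rewrite preimsetT setDT cards0 addn0.
- move=> x y [A ->] [B ->]; rewrite /minn; case: ifP => _; by [exists A | exists B].
- by move=> A _; exists A.
Qed.


Lemma rk_mono (m : nat) (a : 'I_m -> nat) (rk : {set 'I_m} -> nat) (A B : {set 'I_m}) :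
  polymatroid a rk -> A \subset B -> (rk A <= rk B)%N.
Proof. by case=> _ H _ _; apply: H. Qed.

Lemma rk_submod (m : nat) (a : 'I_m -> nat) (rk : {set 'I_m} -> nat) (A B : {set 'I_m}) :
  polymatroid a rk -> (rk (A :|: B) + rk (A :&: B) <= rk A + rk B)%N.
Proof. by case=> _ _ H _; apply: H. Qed.

Lemma submod_le (m : nat) (a : 'I_m -> nat) (rk : {set 'I_m} -> nat) (X Y U V : {set 'I_m}) :
  polymatroid a rk -> U \subset X :|: Y -> V \subset X :&: Y ->
  (rk U + rk V <= rk X + rk Y)%N.
Proof.
move=> HP hU hV; apply: leq_trans (rk_submod X Y HP).
by apply: leq_add; apply: rk_mono HP _.
Qed.

Lemma rk_single (m n : nat) (a : 'I_m -> nat) (rk : {set 'I_m} -> nat) (pi : 'I_n -> 'I_m) (A : {set 'I_m}) i :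
  polymatroid a rk -> (forall i, #|pi @^-1: [set i]| = a i) ->
  (rk (A :|: [set i]) <= rk A + #|pi @^-1: [set i]|)%N.
Proof.
move=> HP Hf; rewrite Hf; case: (HP) => _ _ _ Ha.
apply: leq_trans (leq_addr (rk (A :&: [set i])) _) _.
apply: leq_trans (rk_submod A [set i] HP) _; exact: leq_add.

Qed.

End M_C.
Import M_C.

Module M_D.

Ltac gen_card := repeat match goal with |- context [@card.body ?T ?A] =>
  let x := fresh "c" in set x := @card.body T A; clearbody x end.
Ltac gen_fun f := repeat match goal with |- context [f ?A] =>
  let x := fresh "r" in set x := f A; clearbody x end.
Tactic Notation "natlia" constr(f) := gen_card; gen_fun f; lia.

Lemma card_disj_le (T : finType) (Y1 Y2 X : {set T}) :
  Y1 :&: Y2 = set0 -> Y1 :|: Y2 \subset X -> (#|Y1| + #|Y2| <= #|X|)%N.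
Proof.
move=> h0 hs; have := subset_leq_card hs; by rewrite cardsU h0 cards0 subn0.
Qed.

Fact Fof_key : unit. Proof. exact: tt. Qed.
Definition Fof (m n : nat) (pi : 'I_n -> 'I_m) (G : {set 'I_n}) : {set 'I_m} :=
  locked_with Fof_key [set i | pi @^-1: [set i] \subset G].
Lemma mem_Fof (m n : nat) (pi : 'I_n -> 'I_m) (G : {set 'I_n}) (i : 'I_m) :
  (i \in Fof pi G) = (pi @^-1: [set i] \subset G).
Proof. rewrite /Fof unlock_with. by rewrite inE. Qed.
Definition Jof (m n : nat) (pi : 'I_n -> 'I_m) (G : {set 'I_n}) : {set 'I_n} :=
  G :\: pi @^-1: Fof pi G.

Lemma preim_Fof_sub (m n : nat) (pi : 'I_n -> 'I_m) (G : {set 'I_n}) :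
  pi @^-1: Fof pi G \subset G.
Proof.
apply/subsetP => j; rewrite !inE mem_Fof => /subsetP; apply; by rewrite !inE.
Qed.

Lemma Fof_mono (m n : nat) (pi : 'I_n -> 'I_m) (G G' : {set 'I_n}) :
  G \subset G' -> Fof pi G \subset Fof pi G'.
Proof.
move=> h; apply/subsetP => i; rewrite !mem_Fof => h2; exact: subset_trans h2 h.
Qed.

Lemma rk_preim (m n : nat) (a : 'I_m -> nat) (rk : {set 'I_m} -> nat) (pi : 'I_n -> 'I_m)
  (A C : {set 'I_m}) :
  polymatroid a rk -> (forall i : 'I_m, #|pi @^-1: [set i]| = a i) ->
  (rk (A :|: C) <= rk A + #|pi @^-1: C|)%N.
Proof.
move=> HP Hf; have [k] := ubnP #|C|; elim: k C => // k IH C hC.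
case: (set_0Vmem C) => [->|[i iC]]; first by rewrite setU0 leq_addr.
have hC' : (#|C :\ i| < k)%N by rewrite (cardsD1 i C) iC in hC.
have e1 : A :|: C = (A :|: C :\ i) :|: [set i].
  by rewrite -setUA [_ :|: [set i]]setUC setD1K.
have e2 : #|pi @^-1: C| = (#|pi @^-1: (C :\ i)| + #|pi @^-1: [set i]|)%N.
  rewrite -(cardsID (pi @^-1: [set i]) (pi @^-1: C)) preimsetD addnC.
  have -> : pi @^-1: C :&: pi @^-1: [set i] = pi @^-1: [set i].
    apply/setP => j; rewrite !inE andbC; case: eqP => [->|] //=; by rewrite iC.
  by [].
rewrite e1 e2; apply: leq_trans (rk_single _ _ HP Hf) _.
by rewrite addnA leq_add2r; apply: IH.
Qed.

Lemma rk_preimD (m n : nat) (a : 'I_m -> nat) (rk : {set 'I_m} -> nat) (pi : 'I_n -> 'I_m)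
  (A F : {set 'I_m}) :
  polymatroid a rk -> (forall i : 'I_m, #|pi @^-1: [set i]| = a i) ->
  (rk (A :|: F) <= rk A + #|pi @^-1: (F :\: A)|)%N.
Proof.
move=> HP Hf; apply: leq_trans (rk_preim _ _ HP Hf); apply: rk_mono HP _.
apply/subsetP => i; rewrite !inE; by case: (i \in A); case: (i \in F).
Qed.

Lemma flat_rank (m n : nat) (a : 'I_m -> nat) (rk : {set 'I_m} -> nat) (pi : 'I_n -> 'I_m)
  (G : {set 'I_n}) :
  polymatroid a rk -> (forall i : 'I_m, #|pi @^-1: [set i]| = a i) ->
  is_flat (lift_rank pi rk) G ->
  lift_rank pi rk G = (rk (Fof pi G) + #|Jof pi G|)%N.
Proof.
move=> HP Hf Hfl; apply/eqP; rewrite eqn_leq (lift_le pi rk G (Fof pi G)) /=.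
have [A hA] := lift_att pi rk G.
have sA : pi @^-1: A \subset G.
  apply/subsetP => e he; apply/negPn/negP => heG.
  have := Hfl e heG; have := lift_le pi rk (e |: G) A.
  have -> : (e |: G) :\: pi @^-1: A = G :\: pi @^-1: A.
    move: he; rewrite inE => he.
    apply/setP => j; rewrite !inE; case: eqP => [->|] //=; by rewrite he.
  rewrite -hA => h1 h2; have := leq_trans h2 h1; by rewrite ltnn.
have sAF : A \subset Fof pi G.
  apply/subsetP => i iA; rewrite mem_Fof; apply: subset_trans sA.
  by apply/subsetP => j; rewrite !inE => /eqP ->.
rewrite hA; have h1 := @rk_preimD _ _ _ _ pi A (Fof pi G) HP Hf.
have eAF : A :|: Fof pi G = Fof pi G by apply/setUidPr.
rewrite eAF in h1.
have h2 : (#|pi @^-1: (Fof pi G :\: A)| + #|Jof pi G| <= #|G :\: pi @^-1: A|)%N.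
  apply: card_disj_le.
    apply/setP => j; rewrite !inE; by case: (pi j \in Fof pi G); rewrite ?andbF.
  apply/subsetP => j; rewrite !inE; have /subsetP := preim_Fof_sub pi G.
  move/(_ j); rewrite !inE; have /subsetP := sAF; move/(_ (pi j)).
  by case: (pi j \in A); case: (pi j \in Fof pi G); case: (j \in G) => //= _ ->.
move: h1 h2; natlia rk.
Qed.

Tactic Notation "natlia2" constr(f) constr(g) := gen_card; gen_fun f; gen_fun g; lia.

Lemma flat_ineq (m n : nat) (a : 'I_m -> nat) (rk : {set 'I_m} -> nat) (pi : 'I_n -> 'I_m)
  (G : {set 'I_n}) (A : {set 'I_m}) :
  polymatroid a rk -> (forall i : 'I_m, #|pi @^-1: [set i]| = a i) ->
  is_flat (lift_rank pi rk) G ->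
  (rk (Fof pi G) + #|Jof pi G :&: pi @^-1: A| + ~~ (A \subset Fof pi G)
     <= rk (A :|: Fof pi G))%N.
Proof.
move=> HP Hf Hfl; have hM := flat_rank HP Hf Hfl.
have hJ := cardsID (pi @^-1: A) (Jof pi G).
have eq1 : forall X : {set 'I_n}, X \subset G -> (X :\: pi @^-1: (A :|: Fof pi G)) \subset Jof pi G :\: pi @^-1: A.
  move=> X hX; apply/subsetP => j; rewrite /Jof !inE negb_or => /andP [/andP [h1 h2] jX].
  by rewrite h1 h2 (subsetP hX j jX).
case: (boolP (A \subset Fof pi G)) => hAF /=.
  have h1 := lift_le pi rk G (A :|: Fof pi G).
  have h2 := subset_leq_card (eq1 G (subxx G)).
  move: h1 h2 hM hJ; natlia2 rk (lift_rank pi rk).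
have [i iA iF] := subsetPn hAF.
move: iF; rewrite mem_Fof => /subsetPn [e]; rewrite !inE => /eqP hei heG.
have h0 := Hfl e heG.
have h1 := lift_le pi rk (e |: G) (A :|: Fof pi G).
have h2 : #|(e |: G) :\: pi @^-1: (A :|: Fof pi G)| <= #|Jof pi G :\: pi @^-1: A|.
  apply: subset_leq_card; apply/subsetP => j; rewrite !inE.
  case: eqP => [->|_] /=; first by rewrite hei iA.
  move=> h; have : j \in G :\: pi @^-1: (A :|: Fof pi G) by rewrite !inE.
  by move/(subsetP (eq1 G (subxx G))); rewrite !inE.
move: h0 h1 h2 hM hJ; natlia2 rk (lift_rank pi rk).
Qed.

Lemma Fof_flat (m n : nat) (a : 'I_m -> nat) (rk : {set 'I_m} -> nat) (pi : 'I_n -> 'I_m)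
  (G : {set 'I_n}) :
  polymatroid a rk -> (forall i : 'I_m, #|pi @^-1: [set i]| = a i) ->
  is_flat (lift_rank pi rk) G -> is_flat rk (Fof pi G).
Proof.
move=> HP Hf Hfl i iF; have := flat_ineq [set i] HP Hf Hfl.
have -> : ([set i] \subset Fof pi G) = false by rewrite sub1set (negbTE iF).
move=> h; apply: leq_trans h; rewrite addn1 ltnS leq_addr //.
Qed.

Lemma K1 (m n : nat) (a : 'I_m -> nat) (rk : {set 'I_m} -> nat) (pi : 'I_n -> 'I_m)
  (F : {set 'I_m}) (J : {set 'I_n}) :
  polymatroid a rk -> (forall i : 'I_m, #|pi @^-1: [set i]| = a i) ->
  is_flat rk F -> J :&: pi @^-1: F = set0 ->
  (forall T : {set 'I_n}, T \subset J -> T != set0 -> (rk F + #|T| < rk (F :|: pi @: T))%N) ->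
  is_flat (lift_rank pi rk) (pi @^-1: F :|: J).
Proof.
move=> HP Hf HF HJ H2 e heG.
set G := pi @^-1: F :|: J.
have hup : (lift_rank pi rk G <= rk F + #|J|)%N.
  apply: leq_trans (lift_le pi rk G F) _; rewrite leq_add2l; apply: subset_leq_card.
  by apply/subsetP => j; rewrite !inE; case: (pi j \in F); case: (j \in J).
apply: leq_trans (_ : (rk F + #|J|).+1 <= _)%N; first by rewrite ltnS.
apply: lift_ge => A.
set T := J :&: pi @^-1: A.
have hJ := cardsID (pi @^-1: A) J.
set W := pi @^-1: (F :\: A) :|: (J :\: pi @^-1: A).
have hW : #|W| = (#|pi @^-1: (F :\: A)| + #|J :\: pi @^-1: A|)%N.
  rewrite cardsU; have -> : pi @^-1: (F :\: A) :&: (J :\: pi @^-1: A) = set0.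
    apply/setP => j; move/setP: HJ => /(_ j); rewrite !inE.
    by case: (j \in J); case: (pi j \in F); case: (pi j \in A).
  by rewrite cards0 subn0.
have hWG : W \subset G :\: pi @^-1: A.
  apply/subsetP => j; rewrite !inE.
  by case: (j \in J); case: (pi j \in F); case: (pi j \in A).
have heF : pi e \notin F.
  by move: heG; rewrite !inE negb_or => /andP [].
have heW : e \notin W.
  by apply/negP => /(subsetP hWG); rewrite in_setD => /andP [_]; apply/negP.
have hL0 := @rk_preimD _ _ _ _ pi A F HP Hf.
have hT : (rk F + #|T| + (pi e \in A) <= rk (A :|: F))%N.
  case: (eqVneq T set0) => [T0|Tn0].
    rewrite T0 cards0 addn0; case: (boolP (pi e \in A)) => hA /=.
      rewrite addn1; apply: leq_trans (HF _ heF) _; apply: rk_mono HP _.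
      by apply/subsetP => i; rewrite !inE; case/orP => [/eqP ->|->]; rewrite ?hA ?orbT.
    by rewrite addn0; apply: rk_mono HP _; exact: subsetUr.
  have := H2 T (subsetIl _ _) Tn0.
  have hs : F :|: pi @: T \subset A :|: F.
    apply/subsetP => i; rewrite !inE; case/orP => [->|/imsetP [j]]; first by rewrite orbT.
    by rewrite !inE => /andP [_ jA] ->; rewrite jA.
  have := rk_mono HP hs; case: (pi e \in A) => /=; natlia rk.
case: (boolP (pi e \in A)) => hA.
  have h := subset_leq_card (subset_trans hWG (_ : G :\: pi @^-1: A \subset (e |: G) :\: pi @^-1: A)).
  rewrite hA in hT; move: (h (setSD _ (subsetUr _ _))) hW hT hJ hL0; natlia rk.
have h : e |: W \subset (e |: G) :\: pi @^-1: A.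
  apply/subsetP => j /setU1P [->|jW]; first by rewrite !inE eqxx hA.
  have := subsetP hWG j jW; rewrite !inE => /andP [h1 h2]; by rewrite h1 h2 orbT.
have := subset_leq_card h; rewrite cardsU1 heW.
rewrite (negbTE hA) in hT; move=> h'; move: h' hW hT hJ hL0; natlia rk.
Qed.

End M_D.
Import M_D.

Module M_E.
Local Open Scope ring_scope.

Definition Lset (R : realType) (n : nat) (t : R) (x : 'rV[R]_n) : {set 'I_n} :=
  [set j | t <= x 0 j].
Definition posset (R : realType) (n : nat) (x : 'rV[R]_n) : {set 'I_n} :=
  [set j | 0 < x 0 j].

Lemma row_decomp (R : realType) (n : nat) (x : 'rV[R]_n) :
  x = \sum_(j < n) x 0 j *: evec R [set j].
Proof.
apply/rowP => k; rewrite summxE (bigD1 k) //= !mxE inE eqxx mulr1 big1 ?addr0 //.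
by move=> j /negbTE hj; rewrite !mxE inE eq_sym hj mulr0.
Qed.

Lemma GenLemma (R : realType) (n : nat) (Q : {set 'I_n} -> Prop) (x : 'rV[R]_n) :
  (forall t, t <= 0 -> Lset t x != setT -> Q (Lset t x)) ->
  exists Gs : seq {set 'I_n}, sorted (fun A B : {set 'I_n} => A \proper B) Gs /\
   (forall G, G \in Gs -> [/\ G \proper setT, Q G & Lset 0 x \subset G]) /\
   in_cone (cone_gens R (@id 'I_n) (posset x) Gs) x.
Proof.
have [N] := ubnP #|[set j | x 0 j < 0]|; elim: N x => // N IH x hN HQ.
case: (set_0Vmem [set j | x 0 j < 0]) => [Hneg|[j1 hj1]].
  exists [::]; split => //; split; first by move=> G; rewrite in_nil.
  suff : in_cone (cone_gens R (@id 'I_n) (posset x) [::]) (\sum_(j < n) x 0 j *: evec R [set j]).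
    by rewrite -row_decomp.
  apply: in_cone_sum => j _.
  have xj : 0 <= x 0 j.
    rewrite leNgt; apply/negP => h; suff : j \in [set j | x 0 j < 0] by rewrite Hneg inE.
    by rewrite inE.
  case: (boolP (0 < x 0 j)) => hj.
    apply: in_coneZ; first exact: ltW.
    apply: in_cone_mem; rewrite mem_cat; apply/orP; right.
    by apply/mapP; exists j => //; rewrite mem_enum inE.
  have -> : x 0 j = 0 by apply/eqP; rewrite eq_le xj andbT leNgt.
  rewrite scale0r; exact: in_cone0.
rewrite inE in hj1.
have [j0 hj0 Hmax] := @arg_maxP _ _ _ j1 [pred j | x 0 j < 0] (fun j => x 0 j) hj1.
move: hj0; rewrite inE /= => hj0.
set ts := x 0 j0.
set L0 := Lset 0 x.
set x' := x - ts *: evec R (~: L0).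
have ex' : forall j, x' 0 j = if j \in L0 then x 0 j else x 0 j - ts.
  move=> j; rewrite /x' !mxE inE; case: (j \in L0) => /=; by rewrite ?mulr0 ?subr0 ?mulr1.
have hL0 : forall j, (j \in L0) = (0 <= x 0 j) by move=> j; rewrite inE.
have hj0L : (j0 \in L0) = false by rewrite hL0 leNgt hj0.
have hx'0 : x' 0 j0 = 0 by rewrite ex' hj0L /ts subrr.
have hneg' : [set j | x' 0 j < 0] \proper [set j | x 0 j < 0].
  rewrite properE; apply/andP; split.
    apply/subsetP => j; rewrite !inE ex' hL0; case: ifP => hj //.
    rewrite subr_lt0 => h; exact: lt_trans h hj0.
  apply/subsetPn; exists j0; rewrite !inE ?hj0 // ex' hL0.
  by rewrite leNgt hj0 /= /ts subrr ltxx.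
have hpos : posset x' = posset x.
  apply/setP => j; rewrite !inE ex' hL0; case: ifP => // hj.
  have hj' : x 0 j < 0 by rewrite ltNge hj.
  have := Hmax j; rewrite inE /= => /(_ hj') hm.
  rewrite subr_gt0 ltNge hm /=; apply/esym/negbTE; by rewrite -leNgt ltW.
have hlev : forall s, s <= 0 -> Lset s x' = Lset (s + ts) x.
  move=> s hs; apply/setP => j; rewrite !inE ex' hL0; case: ifP => hj.
    rewrite (le_trans hs hj); apply/esym; apply: le_trans hj.
    by rewrite -(addr0 0) lerD // ltW.
  by rewrite lerBrDr.
have [Gs' [Hs' [HG' Hc']]] : exists Gs : seq {set 'I_n}, sorted (fun A B : {set 'I_n} => A \proper B) Gs /\
   (forall G, G \in Gs -> [/\ G \proper setT, Q G & Lset 0 x' \subset G]) /\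
   in_cone (cone_gens R (@id 'I_n) (posset x') Gs) x'.
  apply: IH.
    apply: leq_trans (proper_card hneg') _; by rewrite -ltnS.
  move=> s hs; rewrite hlev //; apply: HQ.
  by rewrite -(addr0 0) lerD // ltW.
have hLL : L0 \proper Lset 0 x'.
  rewrite properE; apply/andP; split.
    apply/subsetP => j; rewrite !inE ex' hL0 => h; by rewrite h.
  apply/subsetPn; exists j0; first by rewrite inE hx'0.
  by rewrite hj0L.
exists (L0 :: Gs'); split.
  move: Hs'; case: Gs' HG' {Hc'} => //= G Gs'' HG' ->; rewrite andbT.
  have [_ _ h] := HG' G (mem_head _ _); exact: proper_sub_trans hLL h.
split.
  move=> G; rewrite in_cons => /orP [/eqP ->|hG].
    split => //.
    - rewrite properT; apply/eqP => h; have : j0 \in L0 by rewrite h inE.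
      by rewrite hj0L.
    - apply: HQ => //; apply/eqP => h; have : j0 \in L0 by rewrite /L0 h inE.
      by rewrite hj0L.
  have [h1 h2 h3] := HG' G hG; split => //; exact: subset_trans (proper_sub hLL) h3.
have ex : x' + (- ts) *: (- evec R (~: (@id 'I_n @^-1: L0))) = x.
  by rewrite preimset_id scaleNr scalerN opprK /x' subrK.
suff : in_cone (cone_gens R (@id 'I_n) (posset x) (L0 :: Gs')) (x' + (- ts) *: (- evec R (~: (@id 'I_n @^-1: L0)))).
  by rewrite ex.
apply: in_coneD.
  apply: in_cone_sub Hc' => v hv; apply: in_cone_mem.
  rewrite hpos in hv; by rewrite /cone_gens /= in_cons hv orbT.
apply: in_coneZ; first by rewrite oppr_ge0 ltW.
by apply: in_cone_mem; rewrite /cone_gens /= in_cons eqxx.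
Qed.

End M_E.
Import M_E.

Module M_F.
Local Open Scope ring_scope.

Definition lev (T : finType) (Fs : seq {set T}) (i : T) : nat :=
  find (fun F : {set T} => i \in F) Fs.

Lemma chain_nth (T : finType) (s : seq {set T}) (i : T) (k : nat) :
  sorted (fun A B : {set T} => A \subset B) s -> (k < size s)%N ->
  (i \in nth set0 s k) = (lev s i <= k)%N.
Proof.
move=> hs hk; apply/idP/idP => h.
  rewrite leqNgt; apply/negP => hlt; have := before_find set0 hlt; by rewrite h.
have hh : has (fun F : {set T} => i \in F) s by rewrite has_find; exact: leq_ltn_trans h hk.
have := nth_find set0 hh => /= hi.
have := @sorted_leq_nth _ (fun A B : {set T} => A \subset B) (fun B A C (h1 : A \subset B) h2 => subset_trans h1 h2) (fun A => subxx A) set0 s hs.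
move=> /(_ (lev s i) k) H.
have : nth set0 s (lev s i) \subset nth set0 s k.
  apply: H => //; rewrite inE //; exact: leq_ltn_trans h hk.
by move/subsetP; apply.
Qed.

Lemma sorted_proper_sub (T : finType) (s : seq {set T}) :
  sorted (fun A B : {set T} => A \proper B) s -> sorted (fun A B : {set T} => A \subset B) s.
Proof. apply: sub_sorted => A B; exact: proper_sub. Qed.

Lemma level_set (R : realType) (T : finType) (Fs : seq {set T}) (phi : nat -> R) (t : R) :
  sorted (fun A B : {set T} => A \subset B) Fs ->
  phi 0%N = 0 -> (forall k k', (k <= k')%N -> phi k' <= phi k) -> t <= 0 ->
  [set i | t <= phi (lev Fs i)] = setT \/ [set i | t <= phi (lev Fs i)] \in Fs.
Proof.
move=> hs h0 hmon ht.
pose P := fun k => (k <= size Fs)%N && (t <= phi k).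
have exP : exists k, P k by exists 0%N; rewrite /P leq0n h0 ht.
have ubP : forall k, P k -> (k <= size Fs)%N by move=> k /andP [].
case: (ex_maxnP exP ubP) => K PK HK.
have eq : forall i, (t <= phi (lev Fs i)) = (lev Fs i <= K)%N.
  move=> i; apply/idP/idP => h.
    apply: HK; rewrite /P h andbT; exact: find_size.
  apply: le_trans (hmon _ _ h); by case/andP: PK.
case: (ltnP K (size Fs)) => hK.
  right; have -> : [set i | t <= phi (lev Fs i)] = nth set0 Fs K.
    apply/setP => i; by rewrite inE eq chain_nth.
  exact: mem_nth.
left; apply/setP => i; rewrite !inE eq; apply: leq_trans hK; exact: find_size.
Qed.

Definition PhiP (R : realType) (m n : nat) (pi : 'I_n -> 'I_m) (S : {set 'I_n})
  (Fs : seq {set 'I_m}) (v : 'rV[R]_n) : Prop :=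
  exists phi : nat -> R, [/\ phi 0%N = 0, (forall k k', (k <= k')%N -> phi k' <= phi k)
    & forall j, phi (lev Fs (pi j)) <= v 0 j /\ (j \notin S -> v 0 j = phi (lev Fs (pi j)))].

Lemma Pcone_Phi (R : realType) (m n : nat) (pi : 'I_n -> 'I_m) (S : {set 'I_n})
  (Fs : seq {set 'I_m}) (x : 'rV[R]_n) :
  sorted (fun A B : {set 'I_m} => A \proper B) Fs -> cone_of pi S Fs x -> PhiP pi S Fs x.
Proof.
move=> hs; have hs' := sorted_proper_sub hs.
apply: in_cone_ind.
- exists (fun _ => 0); split => // j; rewrite mxE; by split.
- move=> u v [p1 [h10 h1m h1]] [p2 [h20 h2m h2]].
  exists (fun k => p1 k + p2 k); split; first by rewrite h10 h20 addr0.
    by move=> k k' hk; rewrite lerD // ?h1m ?h2m.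
  move=> j; rewrite mxE; have [a1 b1] := h1 j; have [a2 b2] := h2 j; split.
    exact: lerD.
  by move=> hj; rewrite b1 // b2.
- move=> c v hc [p [h0 hm h]]; exists (fun k => c * p k); split.
  + by rewrite h0 mulr0.
  + by move=> k k' hk; rewrite ler_wpM2l // hm.
  + move=> j; rewrite mxE; have [a b] := h j; split; first by rewrite ler_wpM2l.
    by move=> hj; rewrite b.
- move=> v; rewrite mem_cat => /orP [/mapP [F hF ->]|/mapP [j1 hj1 ->]].
    set k := index F Fs.
    have hk : (k < size Fs)%N by rewrite index_mem.
    exists (fun l => if (k < l)%N then -1 else 0); split => //.
      move=> l l' hl; case: ifP => h1; case: ifP => h2 //; first by rewrite oppr_le0 ler01.
      by move: h1; rewrite (leq_trans h2 hl).
    have e : forall j, (- evec R (~: (pi @^-1: F))) 0 j = if (k < lev Fs (pi j))%N then -1 else 0.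
      move=> j; rewrite mxE evecE !inE.
      have := chain_nth (pi j) hs' hk; rewrite nth_index // => ->.
      rewrite -ltnNge; case: ltnP => //= _; by rewrite oppr0.
    by move=> j; rewrite e; split.
  exists (fun _ => 0); split => // j; rewrite evecE inE; split; first by [].
  move=> hj; case: eqP => // hjj; move: hj hj1; by rewrite hjj mem_enum => /negbTE ->.
Qed.

End M_F.
Import M_F.

Module M_G.
Local Open Scope ring_scope.

Lemma indep_lift (m n : nat) (a : 'I_m -> nat) (rk : {set 'I_m} -> nat) (pi : 'I_n -> 'I_m)
  (S I : {set 'I_n}) :
  polymatroid a rk ->
  (forall T : {set 'I_n}, T \subset S -> (#|T| <= rk (pi @: T))%N) ->
  I \subset S -> lift_rank pi rk I = #|I|.
Proof.
move=> HP H1 hI; apply/eqP; rewrite eqn_leq; apply/andP; split.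
  apply: leq_trans (lift_le pi rk I set0) _.
  case: (HP) => -> _ _ _; rewrite preimset0 setD0 //.
apply: lift_ge => A; rewrite -(cardsID (pi @^-1: A) I) leq_add2r.
have hT : I :&: pi @^-1: A \subset S by apply: subset_trans (subsetIl _ _) hI.
apply: leq_trans (H1 _ hT) _; apply: rk_mono HP _.
apply/subsetP => i /imsetP [j]; rewrite !inE => /andP [_ h] ->; done.
Qed.

Lemma part1 (R : realType) (m n : nat) (a : 'I_m -> nat) (pi : 'I_n -> 'I_m)
  (rk : {set 'I_m} -> nat) (S : {set 'I_n}) (Fs : seq {set 'I_m}) (x : 'rV[R]_n) :
  (forall i : 'I_m, #|pi @^-1: [set i]| = a i) -> polymatroid a rk ->
  Sigma_P_idx pi rk S Fs -> cone_of pi S Fs x ->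
  exists I Gs, Sigma_M_idx (lift_rank pi rk) I Gs /\ cone_of id I Gs x.
Proof.
move=> Hf HP [[[Hsort Hprop] Hcomp] Hflat H1 H2] Hc.
have [phi [h0 hmon hphi]] := Pcone_Phi Hsort Hc.
have hs' := sorted_proper_sub Hsort.
have Hpos : posset x \subset S.
  apply/subsetP => j; rewrite inE => hj; apply/negPn/negP => hjS.
  have [_ /(_ hjS) e] := hphi j; move: hj; rewrite e => hj.
  have := hmon 0%N (lev Fs (pi j)) (leq0n _); rewrite h0 => h.
  by move: (lt_le_trans hj h); rewrite ltxx.
have HQ : forall t, t <= 0 -> Lset t x != setT -> is_flat (lift_rank pi rk) (Lset t x).
  move=> t ht hT.
  set F := [set i | t <= phi (lev Fs i)].
  set J := Lset t x :\: pi @^-1: F.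
  have hFL : pi @^-1: F \subset Lset t x.
    apply/subsetP => j; rewrite !inE => h; apply: le_trans h _; by case: (hphi j).
  have eL : Lset t x = pi @^-1: F :|: J.
    apply/setP => j; rewrite !inE; case: (boolP (t <= phi (lev Fs (pi j)))) => //= h.
    by apply: le_trans h _; case: (hphi j).
  have hJS : J \subset S.
    apply/subsetP => j; rewrite !inE => /andP [h1 h2]; apply/negPn/negP => hjS.
    have [_ /(_ hjS) e] := hphi j; by move: h2; rewrite e (negbTE h1).
  case: (level_set hs' h0 hmon ht) => hF.
    have hF' : F = setT := hF.
    by move: hT; rewrite eL hF' preimsetT setTU eqxx.
  have hF' : F \in Fs := hF.
  rewrite eL; apply: K1 HP Hf (Hflat F hF') _ _.
    apply/setP => j; rewrite !inE; by case: (t <= phi (lev Fs (pi j))); rewrite ?andbF.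
  move=> T hTJ hT0; apply: H2 => //.
    by rewrite mem_rcons in_cons hF' orbT.
  apply: subset_trans hTJ _; apply/subsetP => j; rewrite !inE => /andP [h1 h2].
  by rewrite h1 (subsetP hJS j) // !inE h1 h2.
have [Gs [HGs [HGm Hcone]]] := GenLemma HQ.
have hbot : posset x \subset chain_bottom Gs.
  rewrite /chain_bottom; case: Gs HGs HGm {Hcone} => [|G Gs] _ HGm /=; first exact: subsetT.
  have [_ _ h] := HGm G (mem_head _ _); apply: subset_trans h.
  by apply/subsetP => j; rewrite !inE => /ltW.
exists (posset x), Gs; split; last exact: Hcone.
split => //.
- split.
    split => //; by move=> G /HGm [].
  by move=> A; rewrite preimset_id => h; exact: subset_trans h hbot.
- exact: indep_lift HP H1 Hpos.
- by move=> G /HGm [].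
Qed.

End M_G.
Import M_G.

Module M_H.

Definition Sof (m n : nat) (pi : 'I_n -> 'I_m) (X : {set 'I_n}) (Gs : seq {set 'I_n}) :=
  foldl (fun X G => X :|: Jof pi G) X Gs.

Definition indepP (m n : nat) (pi : 'I_n -> 'I_m) (rk : {set 'I_m} -> nat) (X : {set 'I_n}) :=
  forall A : {set 'I_m}, (#|X :&: pi @^-1: A| <= rk A)%N.

Lemma Sof_sub (m n : nat) (pi : 'I_n -> 'I_m) (Gs : seq {set 'I_n}) (X : {set 'I_n}) :
  X \subset Sof pi X Gs.
Proof.
elim: Gs X => //= G Gs IH X; apply: subset_trans (IH _); exact: subsetUl.
Qed.

Lemma Jof_Sof (m n : nat) (pi : 'I_n -> 'I_m) (Gs : seq {set 'I_n}) (X G : {set 'I_n}) :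
  G \in Gs -> Jof pi G \subset Sof pi X Gs.
Proof.
elim: Gs X => //= G' Gs IH X; rewrite in_cons => /orP [/eqP ->|hG]; last exact: IH.
apply: subset_trans (Sof_sub _ _ _); exact: subsetUr.
Qed.

Lemma path_all_sub (T : finType) (x : {set T}) (s : seq {set T}) :
  path (fun A B : {set T} => A \subset B) x s -> forall G, G \in s -> x \subset G.
Proof.
move=> h G hG; have := @order_path_min _ (fun A B : {set T} => A \subset B) x s (fun B A C (h1 : A \subset B) h2 => subset_trans h1 h2) h.
by move/allP; apply.
Qed.

Lemma Jof_sub (m n : nat) (pi : 'I_n -> 'I_m) (G : {set 'I_n}) : Jof pi G \subset G.
Proof. exact: subsetDl. Qed.

Lemma Ind_b (m n : nat) (a : 'I_m -> nat) (rk : {set 'I_m} -> nat) (pi : 'I_n -> 'I_m) :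
  polymatroid a rk -> (forall i : 'I_m, #|pi @^-1: [set i]| = a i) ->
  forall (Gs : seq {set 'I_n}) (X : {set 'I_n}),
  sorted (fun A B : {set 'I_n} => A \subset B) Gs ->
  (forall G, G \in Gs -> is_flat (lift_rank pi rk) G) ->
  (forall G, G \in Gs -> X \subset G) -> indepP pi rk X -> indepP pi rk (Sof pi X Gs).
Proof.
move=> HP Hf; elim=> //= G Gs IH X hs hfl hX hI.
have hGs := path_all_sub hs.
apply: IH.
- exact: path_sorted hs.
- by move=> G' hG'; apply: hfl; rewrite in_cons hG' orbT.
- move=> G' hG'; rewrite subUset; apply/andP; split.
    apply: subset_trans (hGs _ hG'); apply: hX; exact: mem_head.
  apply: subset_trans (hGs _ hG'); exact: Jof_sub.
move=> A.
have hXG : X \subset G by apply: hX; exact: mem_head.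
have hsub : (X :|: Jof pi G) :&: pi @^-1: A \subset
    (X :&: pi @^-1: (A :&: Fof pi G)) :|: (Jof pi G :&: pi @^-1: A).
  apply/subsetP => j; rewrite in_setI in_setU => /andP [/orP [jX|jJ] jA].
    case: (boolP (j \in Jof pi G)) => jJ; first by rewrite in_setU !in_setI jJ jA orbT.
    have : j \in pi @^-1: Fof pi G.
      by move: jJ; rewrite /Jof in_setD (subsetP hXG j jX) andbT negbK.
    rewrite in_setU !in_setI jX /=; move: jA; rewrite !inE => -> ->; done.
  by rewrite in_setU !in_setI jJ jA orbT.
have h1 := subset_leq_card hsub.
have [h2 _] := leq_card_setU (X :&: pi @^-1: (A :&: Fof pi G)) (Jof pi G :&: pi @^-1: A).
have h3 := hI (A :&: Fof pi G).
have h4 := flat_ineq A HP Hf (hfl G (mem_head _ _)).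
have h5 := rk_submod A (Fof pi G) HP.
move: h1 h2 h3 h4 h5; natlia rk.
Qed.

Definition DP (m n : nat) (pi : 'I_n -> 'I_m) (rk : {set 'I_m} -> nat) (F0 : {set 'I_m})
  (Y : {set 'I_n}) :=
  forall A : {set 'I_m}, ~~ (A \subset F0) ->
    (rk F0 + #|(Y :\: pi @^-1: F0) :&: pi @^-1: A| + 1 <= rk (A :|: F0))%N.

Lemma D_ind (m n : nat) (a : 'I_m -> nat) (rk : {set 'I_m} -> nat) (pi : 'I_n -> 'I_m)
  (F0 : {set 'I_m}) :
  polymatroid a rk -> (forall i : 'I_m, #|pi @^-1: [set i]| = a i) ->
  forall (Gs : seq {set 'I_n}) (X : {set 'I_n}),
  sorted (fun A B : {set 'I_n} => A \subset B) Gs ->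
  (forall G, G \in Gs -> is_flat (lift_rank pi rk) G) ->
  (forall G, G \in Gs -> X \subset G /\ F0 \subset Fof pi G) ->
  DP pi rk F0 X -> DP pi rk F0 (Sof pi X Gs).
Proof.
move=> HP Hf; elim=> //= G Gs IH X hs hfl hX hD.
have hGs := path_all_sub hs.
have [hXG hF0] := hX G (mem_head _ _).
apply: IH.
- exact: path_sorted hs.
- by move=> G' hG'; apply: hfl; rewrite in_cons hG' orbT.
- move=> G' hG'; have [_ h] : X \subset G' /\ F0 \subset Fof pi G'.
    by apply: hX; rewrite in_cons hG' orbT.
  split => //.
  rewrite subUset; apply/andP; split.
    exact: subset_trans hXG (hGs _ hG').
  apply: subset_trans (hGs _ hG'); exact: Jof_sub.
move=> A hA.
set F := Fof pi G.
have hsub : ((X :|: Jof pi G) :\: pi @^-1: F0) :&: pi @^-1: A \subset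
    ((X :\: pi @^-1: F0) :&: pi @^-1: (A :&: F)) :|: (Jof pi G :&: pi @^-1: A).
  apply/subsetP => j; rewrite in_setI in_setD in_setU => /andP [/andP [jH0 /orP [jX|jJ] ] jA].
    case: (boolP (j \in Jof pi G)) => jJ; first by rewrite in_setU !in_setI jJ jA orbT.
    have : j \in pi @^-1: F.
      by move: jJ; rewrite /Jof in_setD (subsetP hXG j jX) andbT negbK.
    rewrite in_setU !in_setI in_setD jX jH0 /=; move: jA; rewrite !inE => -> ->; done.
  by rewrite in_setU !in_setI jJ jA orbT.
have h1 := subset_leq_card hsub.
have [h2 _] := leq_card_setU ((X :\: pi @^-1: F0) :&: pi @^-1: (A :&: F)) (Jof pi G :&: pi @^-1: A).
have h4 := flat_ineq A HP Hf (hfl G (mem_head _ _)).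
case: (boolP (A :&: F \subset F0)) => hAF.
  have e0 : (X :\: pi @^-1: F0) :&: pi @^-1: (A :&: F) = set0.
    apply/setP => j; rewrite !inE; apply/negbTE; apply/negP => /and3P [/andP [k1 _] k2 k3].
    by move: k1; rewrite (subsetP hAF (pi j)) // inE k2 k3.
  rewrite e0 cards0 in h2 h1.
  have hAF' : ~~ (A \subset F).
    apply: contra hA => h; apply: subset_trans hAF; by rewrite subsetI h subxx.
  rewrite -/F hAF' /= in h4.
  have h5 := submod_le (X := A :|: F0) (Y := F) (U := A :|: F) (V := F0) HP.
  have h6 : A :|: F \subset (A :|: F0) :|: F by rewrite -setUA setUS // subsetUr.
  have h7 : F0 \subset (A :|: F0) :&: F by rewrite subsetI subsetUr hF0.
  move: (h5 h6 h7) h1 h2 h4; natlia rk.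
have h3 := hD (A :&: F) hAF.
have h5 := submod_le (X := A :|: F0) (Y := F) (U := A :|: F) (V := (A :&: F) :|: F0) HP.
have h6 : A :|: F \subset (A :|: F0) :|: F by rewrite -setUA setUS // subsetUr.
have h7 : (A :&: F) :|: F0 \subset (A :|: F0) :&: F.
  apply/subsetP => i; rewrite !inE; case/orP => [/andP [-> ->] //|h].
  by rewrite h orbT (subsetP hF0 _ h).
rewrite -/F in h4.
move: (h5 h6 h7) h1 h2 h3 h4; natlia rk.
Qed.

Lemma DP_all (m n : nat) (a : 'I_m -> nat) (rk : {set 'I_m} -> nat) (pi : 'I_n -> 'I_m) :
  polymatroid a rk -> (forall i : 'I_m, #|pi @^-1: [set i]| = a i) ->
  forall (Gs : seq {set 'I_n}) (X : {set 'I_n}),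
  sorted (fun A B : {set 'I_n} => A \subset B) Gs ->
  (forall G, G \in Gs -> is_flat (lift_rank pi rk) G) ->
  (forall G, G \in Gs -> X \subset G) ->
  forall G0, G0 \in Gs -> DP pi rk (Fof pi G0) (Sof pi X Gs).
Proof.
move=> HP Hf; elim=> //= G Gs IH X hs hfl hX G0.
have hGs := path_all_sub hs.
have hXG := hX G (mem_head _ _).
have hX' : forall G', G' \in Gs -> X :|: Jof pi G \subset G'.
  move=> G' hG'; rewrite subUset; apply/andP; split.
    exact: subset_trans hXG (hGs _ hG').
  apply: subset_trans (hGs _ hG'); exact: Jof_sub.
have hfl' : forall G', G' \in Gs -> is_flat (lift_rank pi rk) G'.
  by move=> G' hG'; apply: hfl; rewrite in_cons hG' orbT.
rewrite in_cons => /orP [/eqP ->|hG0]; last exact: IH (path_sorted hs) hfl' hX' G0 hG0.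
apply: (D_ind HP Hf (path_sorted hs) hfl').
  move=> G' hG'; split; first exact: hX'.
  apply: Fof_mono; exact: hGs.
move=> A hA.
have hsub : ((X :|: Jof pi G) :\: pi @^-1: Fof pi G) :&: pi @^-1: A \subset Jof pi G :&: pi @^-1: A.
  apply/subsetP => j; rewrite in_setI in_setD in_setU => /andP [/andP [jH0 /orP [jX|jJ] ] jA].
    by rewrite in_setI jA andbT /Jof in_setD jH0 (subsetP hXG j jX).
  by rewrite in_setI jJ jA.
have h1 := subset_leq_card hsub.
have h4 := flat_ineq A HP Hf (hfl G (mem_head _ _)).
rewrite hA in h4.
move: h1 h4; natlia rk.
Qed.

End M_H.
Import M_H.

Module M_I.
Local Open Scope ring_scope.

Lemma evec_sum (R : realType) (n : nat) (J : {set 'I_n}) :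
  evec R J = \sum_(j in J) evec R [set j].
Proof.
apply/rowP => k; rewrite summxE evecE.
case: (boolP (k \in J)) => hk.
  rewrite (bigD1 k) //= evecE inE eqxx big1 ?addr0 //.
  by move=> j /andP [_ hj]; rewrite evecE inE eq_sym (negbTE hj).
rewrite big1 // => j hj; rewrite evecE inE; case: eqP => // e; by move: hk; rewrite e hj.
Qed.

Lemma evec_split (R : realType) (n : nat) (G H : {set 'I_n}) :
  H \subset G -> - evec R (~: G) = - evec R (~: H) + evec R (G :\: H).
Proof.
move=> hHG; apply/rowP => k; rewrite !mxE !inE.
case: (boolP (k \in H)) => hH; first by rewrite (subsetP hHG k hH) /= !mulr0n oppr0 addr0.
by case: (k \in G) => /=; rewrite ?mulr1n ?mulr0n ?addNr ?oppr0 ?addr0.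
Qed.

Lemma uniq_sorted_proper (T : finType) (s : seq {set T}) (x : {set T}) :
  path (fun A B : {set T} => A \subset B) x s -> uniq (x :: s) ->
  path (fun A B : {set T} => A \proper B) x s.
Proof.
elim: s x => //= y s IH x /andP [hxy hp] /andP [hx hu].
rewrite IH // andbT properEneq hxy andbT.
by apply/eqP => e; move: hx; rewrite e mem_head.
Qed.

Lemma sorted_undup_proper (T : finType) (s : seq {set T}) :
  sorted (fun A B : {set T} => A \subset B) s ->
  sorted (fun A B : {set T} => A \proper B) (undup s).
Proof.
move=> hs.
have hs' : sorted (fun A B : {set T} => A \subset B) (undup s).
  exact: (@subseq_sorted _ (fun A B : {set T} => A \subset B) (fun B A C (h1 : A \subset B) h2 => subset_trans h1 h2) _ _ (undup_subseq s) hs).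
have hu := undup_uniq s.
move: hs' hu; case: (undup s) => //= x s' hp hu; exact: uniq_sorted_proper.
Qed.

Lemma head_sub (T : finType) (s : seq {set T}) (A : {set T}) :
  (forall F, F \in s -> A \subset F) -> A \subset head setT s.
Proof. case: s => [|F s] /= h; [exact: subsetT | apply: h; exact: mem_head]. Qed.

Lemma part2 (R : realType) (m n : nat) (a : 'I_m -> nat) (pi : 'I_n -> 'I_m)
  (rk : {set 'I_m} -> nat) (I : {set 'I_n}) (Gs : seq {set 'I_n}) :
  (forall i : 'I_m, #|pi @^-1: [set i]| = a i) -> polymatroid a rk ->
  Sigma_M_idx (lift_rank pi rk) I Gs ->
  exists S Fs, Sigma_P_idx pi rk S Fs /\
    (forall x : 'rV[R]_n, cone_of id I Gs x -> cone_of pi S Fs x).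
Proof.
move=> Hf HP [[[Hsort Hprop] _] Hind Hflat Hbot].
have hs := sorted_proper_sub Hsort.
have hIG : forall G, G \in Gs -> I \subset G.
  move: Hbot hs; rewrite /chain_bottom; case: (Gs) => [|G1 Gs'] //= hI hp G.
  rewrite in_cons => /orP [/eqP ->|hG] //; exact: subset_trans hI (path_all_sub hp hG).
have hIind : indepP pi rk I.
  move=> A; have h1 := lift_le pi rk I A; have h2 := cardsID (pi @^-1: A) I.
  move: h1 h2; rewrite Hind; natlia rk.
set S := Sof pi I Gs.
set Fs := undup (map (Fof pi) Gs).
have hSind : indepP pi rk S := Ind_b HP Hf hs Hflat hIG hIind.
have hDP := DP_all HP Hf hs Hflat hIG.
have memFs : forall F, F \in Fs -> exists2 G, G \in Gs & F = Fof pi G.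
  by move=> F; rewrite mem_undup => /mapP [G hG ->]; exists G.
exists S, Fs; split.
  split.
  - split.
      split.
        apply: sorted_undup_proper; rewrite sorted_map.
        apply: sub_sorted hs => A B /=; exact: Fof_mono.
      move=> F /memFs [G hG ->]; rewrite properT; apply/eqP => e.
      have := preim_Fof_sub pi G; rewrite e preimsetT => h.
      have := Hprop G hG; rewrite properT => /eqP; apply; apply/eqP.
      by rewrite eqEsubset subsetT h.
    move=> A hA; apply: head_sub => F /memFs [G hG ->].
    apply/subsetP => i iA; apply/negPn/negP => iF.
    have hiF : ~~ ([set i] \subset Fof pi G) by rewrite sub1set.
    have h1 := hDP G hG [set i] hiF.
    have h2 := @rk_single _ _ _ _ pi (Fof pi G) i HP Hf.
    have h3 : pi @^-1: [set i] \subset (S :\: pi @^-1: Fof pi G) :&: pi @^-1: [set i].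
      apply/subsetP => j hj; rewrite in_setI hj andbT in_setD.
      move: hj; rewrite !inE => /eqP hji; rewrite hji (negbTE iF) /=.
      apply: (subsetP hA); by rewrite !inE hji.
    have h4 := subset_leq_card h3.
    rewrite setUC in h2; move: h1 h2 h4; rewrite Hf; natlia rk.
  - move=> F /memFs [G hG ->]; exact: Fof_flat HP Hf (Hflat G hG).
  - move=> T hT; apply: leq_trans (hSind (pi @: T)); apply: subset_leq_card.
    apply/subsetP => j hj; rewrite in_setI (subsetP hT j hj) /= inE.
    by apply: imset_f.
  - move=> F; rewrite mem_rcons in_cons => /orP [/eqP ->|/memFs [G hG ->]] T hT hT0.
      case/set0Pn: hT0 => t ht; have := subsetP hT t ht; by rewrite !inE.
    have hA : ~~ (pi @: T \subset Fof pi G).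
      case/set0Pn: hT0 => t ht; apply/subsetPn; exists (pi t); first exact: imset_f.
      by have := subsetP hT t ht; rewrite !inE => /andP [].
    have h1 := hDP G hG (pi @: T) hA.
    have h2 : T \subset (S :\: pi @^-1: Fof pi G) :&: pi @^-1: (pi @: T).
      apply/subsetP => j hj; rewrite in_setI (subsetP hT j hj) /= inE; exact: imset_f.
    have h3 := subset_leq_card h2.
    rewrite setUC in h1; move: h1 h3; natlia rk.
move=> x; apply: in_cone_sub => v; rewrite mem_cat => /orP [/mapP [G hG ->]|/mapP [j hj ->]].
  rewrite preimset_id (evec_split R (preim_Fof_sub pi G)); apply: in_coneD.
    apply: in_cone_mem; rewrite mem_cat; apply/orP; left.
    by apply/mapP; exists (Fof pi G) => //; rewrite mem_undup; apply/mapP; exists G.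
  rewrite evec_sum; apply: in_cone_sum => j hj; apply: in_cone_mem.
  rewrite mem_cat; apply/orP; right; apply/mapP; exists j => //.
  by rewrite mem_enum; apply: (subsetP (Jof_Sof pi I hG)).
apply: in_cone_mem; rewrite mem_cat; apply/orP; right; apply/mapP; exists j => //.
by rewrite mem_enum; apply: (subsetP (Sof_sub pi Gs I)); rewrite -mem_enum.
Qed.

End M_I.
Import M_I.

Local Open Scope ring_scope.

Theorem theorem3p8 (R : realType) (m n : nat) (a : 'I_m -> nat)
  (pi : 'I_n -> 'I_m) (rk : {set 'I_m} -> nat) :
  (forall i : 'I_m, #|pi @^-1: [set i]| = a i) ->
  n = (\sum_(i < m) a i)%N ->
  polymatroid a rk ->
  (* equal supports *)
  (forall x : 'rV[R]_n,
     (exists S Fs, Sigma_P_idx pi rk S Fs /\ cone_of pi S Fs x) <->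
     (exists I Fs, Sigma_M_idx (lift_rank pi rk) I Fs /\ cone_of id I Fs x)) /\
  (* Sigma_P coarsens Sigma_{M_pi(P)}: every cone of the latter lies in a cone of the former *)
  (forall I Fs, Sigma_M_idx (lift_rank pi rk) I Fs ->
     exists S Gs, Sigma_P_idx pi rk S Gs /\
       (forall x : 'rV[R]_n, cone_of id I Fs x -> cone_of pi S Gs x)).
Proof.
move=> Hf _ HP; split.
  move=> x; split.
    by move=> [S [Fs [HS Hc]]]; exact: part1 Hf HP HS Hc.
  move=> [I [Gs [HM Hc]]].
  have [S [Fs [HS Hsub]]] := part2 R Hf HP HM.
  by exists S, Fs; split => //; exact: Hsub.
by move=> I Fs HM; exact: part2 Hf HP HM.
Qed.
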